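(* Let $\delta\ge0$, $R,S\ge1$ and $i_1\in\{1,2,3,4\}$. Then $$\#\big\{\mathbf{x}\in\mathbb{Z}^2_{\mathrm{prim}}:\ \textstyle\prod_iL_i(\mathbf{x})\ne0,\ S\le|\mathbf{x}|<2S,\ R\le|L_{i_1}(\mathbf{x})|<2R,\ \Delta_{\mathrm{bad}}(\mathbf{x})>(SR)^\delta\big\}\ll(SR)^{1-\delta/8},$$ with implied constant depending only on $L_1,\dots,L_4$.
   Context: $L_1,\dots,L_4\in\mathbb{Z}[x_1,x_2]$ are pairwise non-proportional linear forms with coprime coefficients; $|\cdot|$ is the sup norm. For $\mathbf{x}$ with $\prod_iL_i(\mathbf{x})\ne0$, $\Delta_{\mathrm{bad}}(\mathbf{x})=\prod_{p^e\,\|\,L_1(\mathbf{x})\cdots L_4(\mathbf{x}),\ e\ge2}p^e$, the square-full part of $L_1(\mathbf{x})\cdots L_4(\mathbf{x})$. *)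

(* Defs.v *)
From HB Require Import structures.
From mathcomp Require Import all_boot all_order all_algebra.
From mathcomp Require Import all_classical all_reals.
From mathcomp Require Import exp.
Set Implicit Arguments. Unset Strict Implicit. Unset Printing Implicit Defensive.
Import Order.TTheory GRing.Theory Num.Theory.
Local Open Scope ring_scope.

Definition linf (a b : 'I_4 -> int) (i : 'I_4) (x : int * int) : int :=
  a i * x.1 + b i * x.2.

Definition prodL (a b : 'I_4 -> int) (x : int * int) : int :=
  \prod_(i < 4) linf a b i x.

Definition supn (x : int * int) : int := Num.max `|x.1| `|x.2|.

Definition sqfull_part (n : nat) : nat :=
  (\prod_(p <- primes n | 1 < logn p n) p ^ logn p n)%N.

Definition Delta_bad (a b : 'I_4 -> int) (x : int * int) : nat :=
  sqfull_part `|prodL a b x|%N.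

Definition counted (R : realType) (a b : 'I_4 -> int) (delta S Rr : R)
    (i1 : 'I_4) (x : int * int) : Prop :=
  [/\ gcdz x.1 x.2 = 1%N,
      prodL a b x != 0,
      S <= (supn x)%:~R < 2 * S,
      Rr <= (`|linf a b i1 x|)%:~R < 2 * Rr
    & (S * Rr) `^ delta < (Delta_bad a b x)%:R].

(* Main.v *)
Require Import Defs.
From HB Require Import structures.
From mathcomp Require Import all_boot all_order all_algebra.
From mathcomp Require Import all_classical all_reals.
From mathcomp Require Import exp.
From mathcomp Require Import zify ring lra.
Import Order.TTheory GRing.Theory Num.Theory.
Set Implicit Arguments. Unset Strict Implicit. Unset Printing Implicit Defensive.

Lemma dvdn_from_logn m n : 0 < m -> 0 < n ->
  (forall p, prime p -> logn p m <= logn p n) -> m %| n.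
Proof.
move=> m0 n0 H; apply/(dvdn_partP _ m0) => p; rewrite mem_primes => /and3P[pp _ _].
by rewrite p_part pfactor_dvdn // H.
Qed.

Lemma prodn_expn I (r : seq I) (P : pred I) F k :
  (\prod_(i <- r | P i) F i) ^ k = \prod_(i <- r | P i) F i ^ k.
Proof. exact: (big_morph (fun x => x ^ k) (fun x y => expnMn x y k) (exp1n k)). Qed.

Lemma logn_prod_primes p (r : seq nat) (P : pred nat) e : prime p -> uniq r ->
  all prime r ->
  logn p (\prod_(q <- r | P q) q ^ e q) = if (p \in r) && P p then e p else 0.
Proof.
move=> pp; elim: r => [|q r IH] /=; first by rewrite big_nil logn1.
move=> /andP[qr ur] /andP[pq pr]; rewrite big_cons in_cons.
have pos : 0 < \prod_(q <- r | P q) q ^ e q.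
  rewrite big_seq_cond; apply: prodn_cond_gt0 => i /andP[ir _].
  by rewrite expn_gt0 prime_gt0 //; move/allP: pr; apply.
have posq : 0 < q ^ e q by rewrite expn_gt0 prime_gt0.
case Pq: (P q).
  rewrite lognM // IH // lognX logn_prime //.
  case: (eqVneq p q) => [->|npq] /=; first by rewrite (negPf qr) Pq muln1 addn0.
  by rewrite muln0.
rewrite IH //; case: (eqVneq p q) => [->|npq] /=; first by rewrite (negPf qr) Pq.
by [].
Qed.

Lemma sqfull_gt0 n : 0 < sqfull_part n.
Proof.
apply: prodn_cond_gt0 => p _; rewrite expn_gt0; case: p => //.
Qed.

Lemma logn_sqfull p n : prime p -> 0 < n ->
  logn p (sqfull_part n) = if 1 < logn p n then logn p n else 0.
Proof.
move=> pp n0; rewrite /sqfull_part logn_prod_primes //; last first.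
- by apply/allP => q; rewrite mem_primes => /and3P[].
- exact: primes_uniq.
rewrite -logn_gt0; case: (leqP (logn p n) 1) => h; last by rewrite (ltn_trans _ h).
by case: (0 < logn p n).
Qed.

Lemma sqfull_dvd n : 0 < n -> sqfull_part n %| n.
Proof.
move=> n0; apply: dvdn_from_logn => // [|p pp]; first exact: sqfull_gt0.
by rewrite logn_sqfull //; case: ifP.
Qed.

Lemma sqfull_ab n : exists al be, [/\ 0 < al, 0 < be & sqfull_part n = al ^ 2 * be ^ 3].
Proof.
exists (\prod_(p <- primes n | 1 < logn p n) p ^ ((logn p n - 3 * (logn p n %% 2)) %/ 2)).
exists (\prod_(p <- primes n | 1 < logn p n) p ^ (logn p n %% 2)).
split.
- apply: prodn_cond_gt0 => p; rewrite expn_gt0 => _; case: p => //.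
- apply: prodn_cond_gt0 => p; rewrite expn_gt0 => _; case: p => //.
rewrite /sqfull_part !prodn_expn -big_split /=; apply: eq_bigr => p Hp.
rewrite -!expnM -expnD; congr (_ ^ _).
move: (logn p n) Hp => v Hv; lia.
Qed.
Definition o0 : 'I_4 := @Ordinal 4 0 isT.
Definition o1 : 'I_4 := @Ordinal 4 1 isT.
Definition o2 : 'I_4 := @Ordinal 4 2 isT.
Definition o3 : 'I_4 := @Ordinal 4 3 isT.

Lemma sum4 (F : 'I_4 -> nat) : \sum_(i < 4) F i = F o0 + F o1 + F o2 + F o3.
Proof.
rewrite !big_ord_recr big_ord0 /= add0n.
by congr (_ + _ + _ + _); congr F; apply: val_inj.
Qed.

Lemma prod4 (F : 'I_4 -> nat) : \prod_(i < 4) F i = F o0 * F o1 * F o2 * F o3.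
Proof.
rewrite !big_ord_recr big_ord0 /= mul1n.
by congr (_ * _ * _ * _); congr F; apply: val_inj.
Qed.

Lemma comb4 (v : 'I_4 -> nat) d : (forall i j, i != j -> minn (v i) (v j) <= d) ->
  (if 1 < \sum_(i < 4) v i then \sum_(i < 4) v i else 0) <=
   4 * d + \sum_(i < 4) (if 1 < v i then v i else 0).
Proof.
move=> H; rewrite !sum4.
have h01 := H o0 o1 isT; have h02 := H o0 o2 isT; have h03 := H o0 o3 isT.
have h12 := H o1 o2 isT; have h13 := H o1 o3 isT; have h23 := H o2 o3 isT.
move: (v o0) (v o1) (v o2) (v o3) h01 h02 h03 h12 h13 h23 => v0 v1 v2 v3 *.
case: (leqP (v0+v1+v2+v3) 1); case: (leqP v0 1); case: (leqP v1 1);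
  case: (leqP v2 1); case: (leqP v3 1); lia.
Qed.

Local Open Scope ring_scope.

Definition Dn (a b : 'I_4 -> int) : nat :=
  (\prod_(i < 4) \prod_(j < 4 | i != j) `|(a i * b j - a j * b i)%R|)%N.

Lemma Dn_gt0 (a b : 'I_4 -> int) :
  (forall i j : 'I_4, i != j -> a i * b j - a j * b i != 0) -> (0 < Dn a b)%N.
Proof.
move=> H; apply: prodn_cond_gt0 => i _; apply: prodn_cond_gt0 => j ij.
by rewrite absz_gt0 H.
Qed.

Lemma dvd_Dn (a b : 'I_4 -> int) i j : i != j ->
  (`|(a i * b j - a j * b i)%R|%N %| Dn a b)%N.
Proof.
move=> ij; rewrite /Dn (bigD1 i) //=; apply: dvdn_mulr.
by rewrite (bigD1 j) //=; apply: dvdn_mulr.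
Qed.

Lemma linf_neq0 (a b : 'I_4 -> int) x i : prodL a b x != 0 -> linf a b i x != 0.
Proof. by move/prodf_neq0; apply. Qed.

Lemma min_le_logD (a b : 'I_4 -> int) x p i j :
  (forall i j : 'I_4, i != j -> a i * b j - a j * b i != 0) ->
  gcdz x.1 x.2 = 1%N -> prodL a b x != 0 -> prime p -> i != j ->
  (minn (logn p `|linf a b i x|) (logn p `|linf a b j x|) <= logn p (Dn a b))%N.
Proof.
move=> Hnp hx hP pp ij.
set k := minn _ _.
have Li0 : (0 < `|linf a b i x|)%N by rewrite absz_gt0 linf_neq0.
have Lj0 : (0 < `|linf a b j x|)%N by rewrite absz_gt0 linf_neq0.
have D0 : (0 < `|(a i * b j - a j * b i)%R|)%N by rewrite absz_gt0 Hnp.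
apply: (@leq_trans (logn p `|(a i * b j - a j * b i)%R|)); last first.
  by apply: dvdn_leq_log; [apply: Dn_gt0 | apply: dvd_Dn].
have hi : ((p ^ k)%:Z %| linf a b i x)%Z.
  by rewrite dvdzE absz_nat pfactor_dvdn // geq_minl.
have hj : ((p ^ k)%:Z %| linf a b j x)%Z.
  by rewrite dvdzE absz_nat pfactor_dvdn // geq_minr.
have [u [v huv]] := Bezoutz x.1 x.2.
rewrite hx in huv.
have E : a i * b j - a j * b i =
   u * (b j * linf a b i x - b i * linf a b j x) +
   v * (a i * linf a b j x - a j * linf a b i x).
  transitivity ((a i * b j - a j * b i) * (u * x.1 + v * x.2)).
    by rewrite huv mulr1.
  rewrite /linf; ring.
have : ((p ^ k)%:Z %| a i * b j - a j * b i)%Z.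
  by rewrite E rpredD // dvdz_mull // rpredB // dvdz_mull.
by rewrite dvdzE absz_nat pfactor_dvdn.
Qed.

Lemma logn_prod_pos p (I : Type) (r : seq I) (F : I -> nat) :
  (forall i, 0 < F i)%N ->
  logn p (\prod_(i <- r) F i) = (\sum_(i <- r) logn p (F i))%N.
Proof.
move=> H; elim: r => [|i r IH]; first by rewrite !big_nil logn1.
rewrite !big_cons lognM ?IH //; apply: prodn_gt0 => j; exact: H.
Qed.

Lemma abs_prod (I : Type) (r : seq I) (F : I -> int) :
  `|(\prod_(i <- r) F i)%R|%N = (\prod_(i <- r) `|F i|)%N.
Proof. exact: (big_morph _ abszM absz1). Qed.

Lemma Delta_bad_dvd (a b : 'I_4 -> int) x :
  (forall i j : 'I_4, i != j -> a i * b j - a j * b i != 0) ->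
  gcdz x.1 x.2 = 1%N -> prodL a b x != 0 ->
  (Delta_bad a b x %| Dn a b ^ 4 * \prod_(i < 4) sqfull_part `|linf a b i x|)%N.
Proof.
move=> Hnp hx hP.
have L0 : forall i, (0 < `|linf a b i x|)%N by move=> i; rewrite absz_gt0 linf_neq0.
have P0 : (0 < `|prodL a b x|)%N by rewrite absz_gt0.
apply: dvdn_from_logn.
- exact: sqfull_gt0.
- by rewrite muln_gt0 expn_gt0 Dn_gt0 //=; apply: prodn_gt0 => i; apply: sqfull_gt0.
move=> p pp; rewrite /Delta_bad logn_sqfull // lognM ?expn_gt0 ?Dn_gt0 //; last first.
  by apply: prodn_gt0 => i; apply: sqfull_gt0.
rewrite lognX.
have -> : logn p (\prod_(i < 4) sqfull_part `|linf a b i x|) =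
   (\sum_(i < 4) logn p (sqfull_part `|linf a b i x|))%N.
  by apply: logn_prod_pos => i; apply: sqfull_gt0.
rewrite /prodL abs_prod logn_prod_pos //.
under [X in (_ <= _ + X)%N]eq_bigr => i _ do rewrite logn_sqfull //.
apply: comb4 => i j ij; exact: min_le_logD.
Qed.

Local Open Scope ring_scope.
Section An.
Variable R : realType.

Definition ftel (a : nat) : R := 2 / (2 * a%:R - 1).

Lemma ftel_ge0 a : (0 < a)%N -> 0 <= ftel a.
Proof.
move=> a0; rewrite /ftel divr_ge0 // subr_ge0.
have : (1 <= a%:R :> R) by rewrite ler1n.
lra.
Qed.

Lemma ftel_step a : (0 < a)%N -> (a%:R ^+ 2)^-1 <= ftel a - ftel a.+1.
Proof.
move=> a0; have ha : (1 <= a%:R :> R) by rewrite ler1n.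
rewrite /ftel; have -> : a.+1%:R = a%:R + 1 :> R by rewrite -natr1.
set t := a%:R in ha *.
have h1 : 0 < 2 * t - 1 by lra.
have h2 : 0 < 2 * (t + 1) - 1 by lra.
rewrite -subr_ge0.
have -> : 2 / (2 * t - 1) - 2 / (2 * (t + 1) - 1) - (t ^+ 2)^-1 =
  1 / ((2 * t - 1) * (2 * (t + 1) - 1) * t ^+ 2).
  by field; rewrite ?(gt_eqF h1) ?(gt_eqF h2) /=; apply/andP; split; lra.
by rewrite divr_ge0 // !mulr_ge0 // ?ltW // sqr_ge0.
Qed.

Lemma tail_tel m N : (0 < m)%N ->
  \sum_(a < N | (m <= a)%N) (a%:R ^+ 2)^-1 <= ftel m - ftel (maxn m N) :> R.
Proof.
move=> m0; elim: N => [|N IH].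
  by rewrite big_ord0 maxn0 subrr.
rewrite big_mkcond big_ord_recr /= -big_mkcond /=.
case: (leqP m N) => hmN.
  rewrite (maxn_idPr (leqW hmN)) (maxn_idPr hmN) in IH *.
  have := ftel_step (leq_trans m0 hmN); lra.
by rewrite addr0 (maxn_idPl hmN); rewrite (maxn_idPl (ltnW hmN)) in IH.
Qed.

Lemma tail_sq (y : R) N : 0 < y ->
  \sum_(a < N | (0 < a)%N && (y < a%:R)) (a%:R ^+ 2)^-1 <= 2 / y.
Proof.
move=> y0; set m := (Num.truncn y).+1.
have E : \sum_(a < N | (0 < a)%N && (y < a%:R)) (a%:R ^+ 2)^-1 =
         \sum_(a < N | (m <= a)%N) (a%:R ^+ 2)^-1 :> R.
  apply: eq_bigl => a; rewrite -truncn_lt_nat ?ltW //.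
  by case: (nat_of_ord a) => //=; rewrite ltn0 andbF.
rewrite E; apply: le_trans (tail_tel N (ltn0Sn _)) _.
have := ftel_ge0 (ltn0Sn (maxn m N).-1); rewrite prednK ?leq_max ?ltn0Sn //.
move=> h; apply: le_trans (_ : ftel m <= _); first lra.
rewrite /ftel; have := truncn_itv (ltW y0); move=> /andP[_ h2].
have hw : 1 <= m%:R :> R by rewrite ler1n.
move: h2; rewrite -/m; set w := m%:R => h2.
have hw2 : 0 < 2 * w - 1 by lra.
rewrite ler_pdivrMr // mulrAC ler_pdivlMr //; lra.
Qed.


Definition gg (b : nat) : R := (b%:R * Num.sqrt b%:R)^-1.

Lemma gg_step n : gg n.+2 <= 2 / Num.sqrt n.+1%:R - 2 / Num.sqrt n.+2%:R.
Proof.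
rewrite /gg.
have hu : 0 < Num.sqrt (n.+1%:R : R) by rewrite sqrtr_gt0 ltr0Sn.
have hv : 0 < Num.sqrt (n.+2%:R : R) by rewrite sqrtr_gt0 ltr0Sn.
have eu := sqr_sqrtr (ler0n R n.+1).
have ev := sqr_sqrtr (ler0n R n.+2).
have e : n.+2%:R = n.+1%:R + 1 :> R by rewrite -natr1.
move: hu hv eu ev; rewrite e; set u := Num.sqrt _; set v := Num.sqrt _.
move=> hu hv eu ev; rewrite -ev.
have huv : u <= v.
  by rewrite /u /v ler_sqrt ?ler_wpDr //; lra.
rewrite -subr_ge0.
have -> : 2 / u - 2 / v - (v ^+ 2 * v)^-1 = (2 * v ^+ 3 - 2 * u * v ^+ 2 - u) / (u * v ^+ 3).
  by field; rewrite ?gt_eqF //.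
apply: divr_ge0; last by apply: mulr_ge0; [lra | apply: exprn_ge0; lra].
nra.
Qed.

Lemma sum_gg N : \sum_(b < N | (0 < b)%N) gg b <= 3.
Proof.
case: N => [|[|n]].
- by rewrite big_ord0.
- rewrite big_mkcond big_ord_recr big_ord0 /=; lra.
suff : \sum_(b < n.+2 | (0 < b)%N) gg b <= 3 - 2 / Num.sqrt n.+1%:R.
  move=> h; apply: le_trans h _; rewrite lerBlDr lerDl divr_ge0 ?sqrtr_ge0 //.
elim: n => [|n IH].
  rewrite big_mkcond !big_ord_recr big_ord0 /= /gg sqrtr1 mulr1 invr1; lra.
rewrite big_mkcond big_ord_recr /= -big_mkcond /=.
have := gg_step n; lra.
Qed.


Lemma gg_sq b : (0 < b)%N -> (b%:R * Num.sqrt (b%:R : R)) ^+ 2 = b%:R ^+ 3.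
Proof. by move=> _; rewrite exprMn sqr_sqrtr ?ler0n // -exprSr. Qed.

Lemma gg_gt0 b : (0 < b)%N -> 0 < gg b.
Proof. by move=> b0; rewrite /gg invr_gt0 mulr_gt0 ?sqrtr_gt0 ?ltr0n. Qed.

Lemma inner_bound (V : R) N b : 0 < V -> (0 < b)%N ->
  \sum_(a < N) (if [&& (0 < a)%N, (0 < b)%N & V < ((a ^ 2 * b ^ 3)%N)%:R]
               then (((a ^ 2 * b ^ 3)%N)%:R)^-1 else 0) <= 2 / Num.sqrt V * gg b.
Proof.
move=> V0 b0.
have sV : 0 < Num.sqrt V by rewrite sqrtr_gt0.
set y := Num.sqrt V * gg b.
have y0 : 0 < y by rewrite mulr_gt0 // gg_gt0.
have b3 : 0 < (b%:R : R) ^+ 3 by rewrite exprn_gt0 // ltr0n.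
have ey : y ^+ 2 * b%:R ^+ 3 = V.
  rewrite /y /gg exprMn exprVn gg_sq // sqr_sqrtr ?ltW // mulfVK //.
  by rewrite gt_eqF.
have E : forall a : 'I_N, (if [&& (0 < a)%N, (0 < b)%N & V < ((a ^ 2 * b ^ 3)%N)%:R]
               then (((a ^ 2 * b ^ 3)%N)%:R)^-1 else 0) =
   (if (0 < a)%N && (y < a%:R) then (b%:R ^+ 3)^-1 * (a%:R ^+ 2)^-1 else 0 :> R).
  move=> a; rewrite b0 /=.
  have -> : (V < ((a ^ 2 * b ^ 3)%N)%:R) = (y < a%:R).
    rewrite natrM !natrX -ey ltr_pM2r // ltr_sqr // ?nnegrE ?ler0n ?ltW //.
  by case: ifP => //; rewrite natrM !natrX invfM mulrC.
rewrite (eq_bigr _ (fun a _ => E a)) -big_mkcond /= -mulr_sumr.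
apply: le_trans (_ : (b%:R ^+ 3)^-1 * (2 / y) <= _).
  by rewrite ler_pM2l ?invr_gt0 // tail_sq.
rewrite /y.
have g0 := gg_gt0 b0.
have ebg : (b%:R ^+ 3)^-1 = gg b ^+ 2.
  by rewrite /gg exprVn gg_sq.
rewrite ebg [X in X <= _](_ : _ = 2 / Num.sqrt V * gg b) //.
by field; rewrite !gt_eqF.
Qed.

Lemma sum_sqfull (V : R) N : 0 < V ->
  \sum_(a < N) \sum_(b < N) (if [&& (0 < a)%N, (0 < b)%N & V < ((a ^ 2 * b ^ 3)%N)%:R]
               then (((a ^ 2 * b ^ 3)%N)%:R)^-1 else 0) <= 6 / Num.sqrt V.
Proof.
move=> V0; rewrite exchange_big /=.
rewrite (bigID (fun b : 'I_N => (0 < b)%N)) /=.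
rewrite [X in _ + X]big1 ?addr0; last first.
  move=> b /negbTE bn; apply: big1 => a _; by rewrite bn andbF.
apply: le_trans (_ : \sum_(b < N | (0 < b)%N) 2 / Num.sqrt V * gg b <= _).
  by apply: ler_sum => b b0; apply: inner_bound.
rewrite -mulr_sumr.
have sV : 0 < Num.sqrt V by rewrite sqrtr_gt0.
have h := sum_gg N.
have -> : 6 / Num.sqrt V = 2 / Num.sqrt V * 3 by field; rewrite gt_eqF.
by rewrite ler_pM2l ?divr_gt0.
Qed.

End An.
Definition rng (n : nat) : seq int := [seq k%:Z - n%:Z | k <- iota 0 (2 * n + 1)].

Lemma mem_rng (u : int) n : (`|u| <= n)%N -> u \in rng n.
Proof.
move=> h; apply/mapP; exists `|(u + n%:Z)%R|%N; rewrite ?mem_iota /=.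
  move: h; lia.
move: h; lia.
Qed.

Lemma count_pairs (s : seq (int * int)) X Y : uniq s ->
  (forall z, z \in s -> (`|z.1| <= X)%N /\ (`|z.2| <= Y)%N) ->
  (size s <= (2 * X + 1) * (2 * Y + 1))%N.
Proof.
move=> us hs.
have -> : ((2 * X + 1) * (2 * Y + 1) = size [seq (u, v) | u <- rng X, v <- rng Y])%N.
  by rewrite size_allpairs !size_map !size_iota.
apply: uniq_leq_size => // z /hs [h1 h2].
by case: z h1 h2 => u v /= h1 h2; apply: allpairs_f; apply: mem_rng.
Qed.

Lemma linf_inj (a b : 'I_4 -> int) i j x y : a i * b j - a j * b i != 0 ->
  linf a b i x = linf a b i y -> linf a b j x = linf a b j y -> x = y.
Proof.
move=> hD hi hj.
have e1 : forall z, (a i * b j - a j * b i) * z.1 = b j * linf a b i z - b i * linf a b j z.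
  by move=> z; rewrite /linf; ring.
have e2 : forall z, (a i * b j - a j * b i) * z.2 = a i * linf a b j z - a j * linf a b i z.
  by move=> z; rewrite /linf; ring.
have h1 : x.1 = y.1 by apply: (mulfI hD); rewrite !e1 hi hj.
have h2 : x.2 = y.2 by apply: (mulfI hD); rewrite !e2 hi hj.
by move: h1 h2; clear; case: x => ? ?; case: y => ? ? /= -> ->.
Qed.

Lemma count_div (a b : 'I_4 -> int) i j (d : nat) X Y (s : seq (int * int)) :
  a i * b j - a j * b i != 0 -> (0 < d)%N -> uniq s ->
  (forall x, x \in s -> [/\ (`|linf a b i x| <= X)%N, (`|linf a b j x| <= Y)%N
      & linf a b i x != 0]) ->
  (size [seq x <- s | (d%:Z %| linf a b i x)%Z] <=
     if (X < d)%N then 0 else (2 * (X %/ d) + 1) * (2 * Y + 1))%N.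
Proof.
move=> hD d0 us hs.
case: ifP => hXd.
  rewrite leqn0 size_eq0 -[_ == _]negbK -has_filter.
  apply/hasPn => x xs; apply/negP => /dvdzP [q hq].
  have [h1 _ h3] := hs x xs.
  move: h1 h3; rewrite hq abszM absz_nat => h1; rewrite mulf_eq0 negb_or => /andP[q0 _].
  move: q0; rewrite -absz_gt0 => q0.
  have : (d <= `|q| * d)%N by rewrite leq_pmull.
  move: hXd h1; lia.
set f := fun x : int * int => ((linf a b i x %/ d%:Z)%Z, linf a b j x).
rewrite -(size_map f); apply: count_pairs.
  rewrite map_inj_in_uniq ?filter_uniq // => x y.
  rewrite !mem_filter => /andP[dx _] /andP[dy _] [e1 e2].
  apply: (linf_inj hD) => //.
  by rewrite -(divzK dx) -(divzK dy) e1.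
move=> z /mapP [x]; rewrite mem_filter => /andP[dx xs] ->{z} /=.
have [h1 h2 _] := hs x xs; split => //.
rewrite leq_divRL //; move: h1; rewrite -{1}(divzK dx) abszM absz_nat.
done.
Qed.

Lemma exists_g (R : realType) (a b : 'I_4 -> int) x (W : R) :
  (forall i j : 'I_4, i != j -> a i * b j - a j * b i != 0) ->
  gcdz x.1 x.2 = 1%N -> prodL a b x != 0 -> 0 < W ->
  W ^+ 8 < (Delta_bad a b x)%:R ->
  exists i : 'I_4, W ^+ 2 / ((Dn a b ^ 4)%N)%:R < (sqfull_part `|linf a b i x|)%:R.
Proof.
move=> Hnp hx hP W0 hW.
set k : R := ((Dn a b ^ 4)%N)%:R.
have k1 : 1 <= k by rewrite /k ler1n expn_gt0 Dn_gt0.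
case: (boolP [exists i : 'I_4, W ^+ 2 / k < (sqfull_part `|linf a b i x|)%:R]).
  by move=> /existsP [i hi]; exists i.
move=> /existsPn hn; exfalso.
have hle : forall i : 'I_4, (sqfull_part `|linf a b i x|)%:R <= W ^+ 2 / k.
  by move=> i; rewrite leNgt; apply: hn.
have pos : (0 < Dn a b ^ 4 * \prod_(i < 4) sqfull_part `|linf a b i x|)%N.
  by rewrite muln_gt0 expn_gt0 Dn_gt0 //=; apply: prodn_gt0 => i; apply: sqfull_gt0.
have hd := dvdn_leq pos (Delta_bad_dvd Hnp hx hP).
have h2 : (Delta_bad a b x)%:R <= k * (W ^+ 2 / k) ^+ 4.
  apply: le_trans (_ : ((Dn a b ^ 4 * \prod_(i < 4) sqfull_part `|linf a b i x|)%N)%:R <= _).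
    by rewrite ler_nat.
  rewrite natrM natr_prod -/k; apply: (ler_wpM2l (le_trans ler01 k1)).
  have -> : (W ^+ 2 / k) ^+ 4 = \prod_(i < 4) (W ^+ 2 / k) by rewrite prodr_const card_ord.
  by apply: ler_prod => i _; rewrite ler0n hle.
have h3 : k * (W ^+ 2 / k) ^+ 4 = W ^+ 8 / k ^+ 3.
  by field; rewrite pnatr_eq0 -lt0n Dn_gt0.
have h4 : W ^+ 8 / k ^+ 3 <= W ^+ 8.
  rewrite ler_pdivrMr ?exprn_gt0 //; last lra.
  have e1 : 1 <= k ^+ 3 by apply: exprn_ege1.
  have e2 : 0 <= W ^+ 8 by apply: exprn_ge0; lra.
  nra.
by move: h2; rewrite h3 => h2; have := le_trans h2 h4; rewrite leNgt hW.
Qed.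

Definition Mn (a b : 'I_4 -> int) : nat := (1 + \sum_(i < 4) (`|a i| + `|b i|))%N.

Lemma supn_ge0 x : 0 <= supn x.
Proof. by rewrite /supn le_max normr_ge0. Qed.

Lemma linf_le (a b : 'I_4 -> int) k x :
  (`|linf a b k x| <= Mn a b * `|supn x|)%N.
Proof.
have s0 := supn_ge0 x.
have h1 : `|x.1| <= supn x by rewrite /supn le_max lexx.
have h2 : `|x.2| <= supn x by rewrite /supn le_max lexx orbT.
have hab : (`|a k| + `|b k| <= Mn a b)%N.
  by rewrite /Mn (bigD1 k) //=; lia.
have hab' : `|a k| + `|b k| <= (Mn a b)%:Z by rewrite -!abszE -PoszD lez_nat.
rewrite -lez_nat PoszM !abszE (ger0_norm s0).
apply: le_trans (ler_normD _ _) _; rewrite !normrM.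
have := normr_ge0 (a k); have := normr_ge0 (b k); have := normr_ge0 x.1;
  have := normr_ge0 x.2.
nra.
Qed.

Lemma count_real (R : realType) (X Y d : nat) : (0 < d)%N -> (0 < Y)%N ->
  (((if (X < d)%N then 0 else (2 * (X %/ d) + 1) * (2 * Y + 1))%N)%:R : R)
    <= 9 * X%:R * Y%:R / d%:R.
Proof.
move=> d0 Y0.
have dR : 0 < (d%:R : R) by rewrite ltr0n.
case: ifP => hXd.
  by rewrite divr_ge0 ?mulr_ge0 ?ler0n.
have q1 : (1 <= X %/ d)%N by rewrite leq_divRL // mul1n leqNgt hXd.
have qd : (X %/ d * d <= X)%N by apply: leq_trunc_div.
have hn : ((2 * (X %/ d) + 1) * (2 * Y + 1) <= 9 * (X %/ d) * Y)%N by nia.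
apply: le_trans (_ : ((9 * (X %/ d) * Y)%N)%:R <= _); first by rewrite ler_nat.
rewrite ler_pdivlMr // !natrM.
have : ((X %/ d)%:R * d%:R <= X%:R :> R) by rewrite -natrM ler_nat.
have : (0 <= Y%:R :> R) by rewrite ler0n.
nra.
Qed.

Lemma union_bound (T : eqType) (I : finType) (P : I -> pred T) (s : seq T) :
  (forall x, x \in s -> exists t, P t x) -> (size s <= \sum_t count (P t) s)%N.
Proof.
elim: s => [|x s IH] hs; first by rewrite big1.
have [t Pt] := hs x (mem_head _ _).
rewrite /= (eq_bigr (fun t => P t x + count (P t) s)%N) // big_split /=.
have h1 : (1 <= \sum_t P t x)%N by rewrite (bigD1 t) //= Pt.
have h2 : (size s <= \sum_t count (P t) s)%N.
  by apply: IH => y ys; apply: hs; rewrite in_cons ys orbT.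
lia.
Qed.

Lemma ab_le (al be : nat) : (0 < al)%N -> (0 < be)%N ->
  (al <= al ^ 2 * be ^ 3)%N /\ (be <= al ^ 2 * be ^ 3)%N.
Proof.
move=> h1 h2; split.
  by rewrite expnS -mulnA leq_pmulr // muln_gt0 h1 expn_gt0 h2.
by rewrite (expnS be) mulnCA leq_pmulr // muln_gt0 !expn_gt0 h1 h2.
Qed.

Unset Implicit Arguments.

Theorem lemma5p9 (R : realType) (a b : 'I_4 -> int)
  (Hcop : forall i : 'I_4, gcdz (a i) (b i) = 1%N)
  (Hnp : forall i j : 'I_4, i != j -> a i * b j - a j * b i != 0) :
  exists C : R, 0 < C /\
    forall (delta S Rr : R) (i1 : 'I_4),
      0 <= delta -> 1 <= S -> 1 <= Rr ->
      forall s : seq (int * int), uniq s ->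
        (forall x, x \in s -> counted a b delta S Rr i1 x) ->
        (size s)%:R <= C * (S * Rr) `^ (1 - delta / 8).
Proof.
pose K := (Dn a b ^ 4)%N; pose M := Mn a b.
have K0 : (0 < K)%N by rewrite expn_gt0 Dn_gt0.
have M0 : (0 < M)%N by rewrite /M /Mn.
exists (864 * M%:R * K%:R); split.
  by rewrite !mulr_gt0 ?ltr0n.
move=> delta S Rr i1 d0 S1 R1 s us hs.
have SR0 : 0 < S * Rr by apply: mulr_gt0; lra.
set W := (S * Rr) `^ (delta / 8).
have W0 : 0 < W by apply: powR_gt0.
have hW8 : (S * Rr) `^ delta = W ^+ 8.
  rewrite /W -powR_mulrn ?powR_ge0 // -powRrM; congr (_ `^ _).
  by rewrite mulrC mulrA [_ * delta]mulrC -mulrA mulfV ?mulr1 // pnatr_eq0.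
set k : R := K%:R.
have k1 : 1 <= k by rewrite /k ler1n.
set V := W ^+ 2 / k.
have V0 : 0 < V by rewrite /V divr_gt0 ?exprn_gt0 //; lra.
set Sn := Num.truncn (2 * S); set Rn := Num.truncn (2 * Rr).
have Sn1 : (0 < Sn)%N by rewrite truncn_gt0; lra.
have Rn1 : (0 < Rn)%N by rewrite truncn_gt0; lra.
have SnR : (Sn%:R : R) <= 2 * S by rewrite truncn_le; lra.
have RnR : (Rn%:R : R) <= 2 * Rr by rewrite truncn_le; lra.
set N := (M * Sn).+1.
have bnd : forall x, x \in s -> [/\ forall k, (`|linf a b k x| <= M * Sn)%N,
    (`|linf a b i1 x| <= Rn)%N, gcdz x.1 x.2 = 1%N, prodL a b x != 0
    & W ^+ 8 < (Delta_bad a b x)%:R].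
  move=> x xs; have [hx hP /andP[hS1 hS2] /andP[hR1 hR2] hD] := hs x xs.
  split => //.
  - move=> k'; apply: leq_trans (linf_le a b k' x) _; rewrite leq_mul2l; apply/orP; right.
    rewrite truncn_ge_nat; last lra.
    by rewrite natr_absz (ger0_norm (supn_ge0 x)) ltW.
  - rewrite truncn_ge_nat; last lra.
    by rewrite natr_absz ltW.
  - by rewrite -hW8.
pose P := fun (t : 'I_4 * ('I_N * 'I_N)) (x : int * int) =>
  [&& (0 < t.2.1)%N, (0 < t.2.2)%N, V < ((t.2.1 ^ 2 * t.2.2 ^ 3)%N)%:R
    & (((t.2.1 ^ 2 * t.2.2 ^ 3)%N)%:Z %| linf a b t.1 x)%Z].
have wit : forall x, x \in s -> exists t, P t x.
  move=> x xs; have [hk _ hx hP hD] := bnd x xs.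
  have [i hi] := exists_g Hnp hx hP W0 hD.
  have [al [be [al0 be0 e]]] := sqfull_ab `|linf a b i x|.
  have L0 : (0 < `|linf a b i x|)%N by rewrite absz_gt0 linf_neq0.
  have hdv := sqfull_dvd L0; rewrite e in hdv hi.
  have hle : (al ^ 2 * be ^ 3 <= M * Sn)%N := leq_trans (dvdn_leq L0 hdv) (hk i).
  have [hal hbe] := ab_le al0 be0.
  have hal' : (al < N)%N by rewrite ltnS (leq_trans hal hle).
  have hbe' : (be < N)%N by rewrite ltnS (leq_trans hbe hle).
  exists (i, (Ordinal hal', Ordinal hbe')); rewrite /P /= al0 be0 -/k -/V hi /=.
  by rewrite dvdzE absz_nat.
have hu := union_bound wit.
pose c := fun (q : 'I_N * 'I_N) =>
  (if [&& (0 < q.1)%N, (0 < q.2)%N & V < ((q.1 ^ 2 * q.2 ^ 3)%N)%:R]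
   then (((q.1 ^ 2 * q.2 ^ 3)%N)%:R)^-1 else 0 : R).
have ht : forall t, ((count (P t) s)%:R : R) <= (36 * M%:R * S * Rr) * c t.2.
  move=> [i [al be]] /=; rewrite /c /=.
  case: ifP => hc; last first.
    rewrite mulr0 (@eq_count _ _ pred0); first by rewrite count_pred0.
    move=> x; rewrite /P /=; apply/negbTE; apply/negP => /and4P[h1 h2 h3 _].
    by move: hc; rewrite h1 h2 h3.
  move/and3P: hc => [al0 be0 hV].
  set d := (al ^ 2 * be ^ 3)%N.
  have dpos : (0 < d)%N by rewrite muln_gt0 !expn_gt0 al0 be0.
  rewrite (@eq_count _ _ (fun x => (d%:Z %| linf a b i x)%Z)); last first.
    by move=> x; rewrite /P /= al0 be0 hV.
  rewrite -size_filter.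
  have key : exists j X Y, [/\ a i * b j - a j * b i != 0, (0 < Y)%N,
      (X * Y = M * Sn * Rn)%N & forall x, x \in s ->
      [/\ (`|linf a b i x| <= X)%N, (`|linf a b j x| <= Y)%N & linf a b i x != 0]].
    case: (eqVneq i i1) => [->|ne].
      exists (if i1 == o0 then o1 else o0), Rn, (M * Sn); split.
      - apply: Hnp; case: (eqVneq i1 o0) => [->|h] //.
      - by rewrite muln_gt0 M0.
      - by rewrite mulnC.
      - move=> x xs; have [hk hr _ hP _] := bnd x xs; split => //; exact: linf_neq0.
    exists i1, (M * Sn), Rn; split.
    - exact: Hnp.
    - exact: Rn1.
    - by [].
    - move=> x xs; have [hk hr _ hP _] := bnd x xs; split => //; exact: linf_neq0.
  have [j [X [Y [hD Y0 hXY hb]]]] := key.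
  have h1 := count_div hD dpos us hb.
  apply: le_trans (_ : (((if (X < d)%N then 0 else (2 * (X %/ d) + 1) * (2 * Y + 1))%N)%:R : R) <= _).
    by rewrite ler_nat.
  apply: le_trans (count_real R X dpos Y0) _.
  rewrite ler_pM2r ?invr_gt0 ?ltr0n //.
  have e : (X%:R * Y%:R : R) = M%:R * Sn%:R * Rn%:R by rewrite -!natrM hXY.
  rewrite -mulrA e.
  have : (0 <= M%:R :> R) by rewrite ler0n.
  have : (0 <= Sn%:R :> R) by rewrite ler0n.
  have : (0 <= Rn%:R :> R) by rewrite ler0n.
  have hm : (M%:R * Sn%:R * Rn%:R : R) <= M%:R * (2 * S) * (2 * Rr).
    by rewrite ler_pM ?mulr_ge0 ?ler0n // ler_pM ?ler0n.
  lra.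
have hsum : (size s)%:R <= \sum_(t : 'I_4 * ('I_N * 'I_N)) (36 * M%:R * S * Rr) * c t.2.
  apply: le_trans (_ : (((\sum_(t : 'I_4 * ('I_N * 'I_N)) count (P t) s)%N)%:R : R) <= _); first by rewrite ler_nat.
  by rewrite natr_sum; apply: ler_sum => t _; apply: ht.
rewrite -mulr_sumr in hsum.
have esum : \sum_(t : 'I_4 * ('I_N * 'I_N)) c t.2 = \sum_(i < 4) \sum_(q : 'I_N * 'I_N) c q.
  by rewrite pair_bigA.
have esum2 : \sum_(q : 'I_N * 'I_N) c q = \sum_(al < N) \sum_(be < N) c (al, be).
  by rewrite pair_bigA.
rewrite esum sumr_const card_ord esum2 in hsum.
have hs6 : \sum_(al < N) \sum_(be < N) c (al, be) <= 6 / Num.sqrt V.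
  exact: sum_sqfull N V0.
have sk0 : 0 < Num.sqrt k by rewrite sqrtr_gt0; lra.
have eV : Num.sqrt V = W / Num.sqrt k.
  by rewrite /V sqrtrM ?exprn_ge0 ?ltW // sqrtr_sqr ger0_norm ?ltW // sqrtrV //; lra.
have skk : Num.sqrt k <= k.
  rewrite -[X in _ <= X](ger0_norm (_ : 0 <= k)); last lra.
  by rewrite -sqrtr_sqr ler_sqrt ?exprn_ge0 //; nra.
have ePow : (S * Rr) `^ (1 - delta / 8) = S * Rr / W.
  rewrite powRB; last by apply/implyP => _; rewrite gt_eqF.
  by rewrite powRr1 // ltW.
rewrite ePow.
move: hs6 hsum; rewrite eV.
set z := \sum_(al < N) \sum_(be < N) c (al, be).
move=> hs6 hsum.
apply: le_trans hsum _.
rewrite -[z *+ 4]mulr_natr.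
have hMSR : 0 <= 36 * M%:R * S * Rr by rewrite !mulr_ge0 ?ler0n //; lra.
apply: le_trans (_ : 36 * M%:R * S * Rr * (6 / (W / Num.sqrt k) * 4%:R) <= _).
  by apply: ler_wpM2l => //; apply: ler_wpM2r.
have -> : 36 * M%:R * S * Rr * (6 / (W / Num.sqrt k) * 4%:R) =
   (864 * M%:R * (S * Rr / W)) * Num.sqrt k.
  by field; rewrite !gt_eqF.
rewrite [X in _ <= X](_ : _ = (864 * M%:R * (S * Rr / W)) * k); last first.
  by ring.
apply: ler_wpM2l => //.
have : 0 <= S * Rr / W by rewrite divr_ge0 // ltW.
have : (0 <= M%:R :> R) by rewrite ler0n.
nra.
Qed.
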